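(* Let $(N,\{S_i\}_{i\in N},S,\{f_i\}_{i\in N})$ be a supermodular game such that $S$ is a subcomplete sublattice of $\prod_{i\in N}S_i$. Suppose that for every $i\in N$ and every $x\in S$, the function $f_i(\cdot,x_{-i}):S_i(x_{-i})\to\mathbb{R}$ is downward upper semicontinuous. Then for every $i\in N$, every $x\in S$ and every nonempty chain $C\subset S(x)$, there is $b\in S(x)$ such that $b\le c$ for every $c\in C$ and $f_i(b_i,x_{-i})\ge\limsup_{c\in C,c\to\inf_S C}f_i(c_i,x_{-i})$.
   Context: A subset $T$ of a poset $P$ is a subcomplete sublattice of $P$ if for every nonempty $A\subset T$, $\sup_P A$ and $\inf_P A$ exist and belong to $T$; $P$ is a complete lattice if it is a subcomplete sublattice of itself. A supermodular game $(N,\{S_i\},S,\{f_i\})$ consists of: a nonempty finite set $N$ of players; for each $i\in N$ a nonempty lattice $S_i$; a nonempty sublattice $S\subset\prod_{i\in N}S_i$ (product order) such that every projection $S\to S_i$ is surjective; and for each $i\in N$ a function $f_i:S\to\mathbb{R}$; such that for every $i\in N$: (1) for every $x_{-i}\in S_{-i}:=\prod_{j\ne i}S_j$, the function $f_i(\cdot,x_{-i})$ is supermodular on the sublattice $S_i(x_{-i}):=\{x_i\in S_i:(x_i,x_{-i})\in S\}$ of $S_i$; (2) $f_i$ has increasing differences on $S$ viewed as a subset of $S_i\times S_{-i}$: whenever $x_i\le x_i'$, $x_{-i}\le x_{-i}'$ and the four points $(x_i,x_{-i}),(x_i',x_{-i}),(x_i,x_{-i}'),(x_i',x_{-i}')$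 lie in $S$, one has $f_i(x_i',x_{-i})-f_i(x_i,x_{-i})\le f_i(x_i',x_{-i}')-f_i(x_i,x_{-i}')$. For $x\in S$, $S(x):=\left(\prod_{i\in N}S_i(x_{-i})\right)\cap S$. For a chain $C$ in a poset and a real function $g$ on $C$, $\limsup_{c\in C,c\to\inf C}g(c):=\inf_{c'\in C}\sup\{g(c):c\in C,c\le c'\}$. For a complete lattice $X$, a function $f:X\to\mathbb{R}$ is downward upper semicontinuous if for every nonempty chain $C\subset X$, $\limsup_{x\in C,x\to\inf_X C}f(x)\le f(\inf_X C)$. (Under the hypotheses, each $S_i(x_{-i})$ is a complete lattice.) *)

(* Defs.v *)
From HB Require Import structures.
From mathcomp Require Import all_boot all_order all_algebra.
From mathcomp Require Import boolp classical_sets reals constructive_ereal ereal.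
Set Implicit Arguments. Unset Strict Implicit. Unset Printing Implicit Defensive.
Import Order.TTheory GRing.Theory Num.Theory.
Local Open Scope classical_set_scope.
Local Open Scope ring_scope.

Section Game.
(* N = the finite player set I; S_i = T i, a lattice; profiles are
   dependent functions (product of the S_i). *)
Context (I : finType) (d : I -> Order.disp_t) (T : forall i, latticeType (d i)).

Definition profile := forall i, T i.

Definition ple (x y : profile) : Prop := forall i, (x i <= y i)%O.
Definition pmeet (x y : profile) : profile := fun i => (x i `&` y i)%O.
Definition pjoin (x y : profile) : profile := fun i => (x i `|` y i)%O.

(* (a, x_{-i}) : replace coordinate i of x by a *)
Definition upd (x : profile) (i : I) (a : T i) : profile := @dfwith I T x i a.

Definition is_lub {P : Type} (le : P -> P -> Prop) (A : set P) (s : P) : Prop :=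
  (forall a, A a -> le a s) /\ (forall u, (forall a, A a -> le a u) -> le s u).
Definition is_glb {P : Type} (le : P -> P -> Prop) (A : set P) (s : P) : Prop :=
  (forall a, A a -> le s a) /\ (forall u, (forall a, A a -> le u a) -> le u s).

Definition is_glb_in {P : Type} (le : P -> P -> Prop) (X C : set P) (s : P) : Prop :=
  X s /\ (forall a, C a -> le s a) /\
  (forall u, X u -> (forall a, C a -> le u a) -> le u s).

Definition is_chain {P : Type} (le : P -> P -> Prop) (C : set P) : Prop :=
  forall a b, C a -> C b -> le a b \/ le b a.

Definition subcomplete (S : set profile) : Prop :=
  forall A : set profile, A `<=` S -> A !=set0 ->
    (exists s, is_lub ple A s /\ S s) /\ (exists t, is_glb ple A t /\ S t).

Definition sublattice (S : set profile) : Prop :=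
  forall x y, S x -> S y -> S (pmeet x y) /\ S (pjoin x y).

Definition Si (S : set profile) (i : I) (x : profile) : set (T i) :=
  [set a | S (upd x a)].

Definition Sx (S : set profile) (x : profile) : set profile :=
  [set y | S y /\ forall i, @Si S i x (y i)].

(* limsup_{c in C, c -> inf C} g(c) := inf_{c' in C} sup {g c | c in C, c <= c'} *)
Definition limsup_chain {R : realType} {P : Type} (le : P -> P -> Prop)
  (C : set P) (g : P -> R) : \bar R :=
  ereal_inf [set ereal_sup [set (g c)%:E | c in [set c | C c /\ le c c']]
            | c' in C].

Definition supermodular_game {R : realType} (S : set profile)
  (f : I -> profile -> R) : Prop :=
  (0 < #|I|)%N /\
  (forall i, inhabited (T i)) /\
  S !=set0 /\
  sublattice S /\
  (forall i (a : T i), exists x, S x /\ x i = a) /\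
      (forall i (x : profile) (a b : T i),
          @Si S i x a -> @Si S i x b ->
          f i (upd x a) + f i (upd x b) <=
          f i (upd x (a `|` b)%O) + f i (upd x (a `&` b)%O)) /\
      (forall i (x y : profile) (a a' : T i),
          (a <= a')%O -> (forall j, j != i -> (x j <= y j)%O) ->
          S (upd x a) -> S (upd x a') -> S (upd y a) -> S (upd y a') ->
          f i (upd x a') - f i (upd x a) <= f i (upd y a') - f i (upd y a)).

Definition downward_usc {R : realType} {P : Type} (le : P -> P -> Prop)
  (X : set P) (g : P -> R) : Prop :=
  forall C : set P, C `<=` X -> C !=set0 -> is_chain le C ->
    forall m, is_glb_in le X C m -> (limsup_chain le C g <= (g m)%:E)%E.

End Game.
Arguments Si {I d T} S i x _.

(* Main.v *)
Require Import Defs.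
From HB Require Import structures.
From mathcomp Require Import all_boot all_order all_algebra.
From mathcomp Require Import boolp classical_sets reals constructive_ereal ereal.
Import Order.TTheory GRing.Theory Num.Theory.
Local Open Scope classical_set_scope.
Local Open Scope ring_scope.

Lemma glb_coord (I : finType) (d : I -> Order.disp_t)
  (T : forall i, latticeType (d i)) (A : set (profile T)) (t : profile T) j
  (u : T j) :
  is_glb (@ple I d T) A t -> (forall a, A a -> (u <= a j)%O) -> (u <= t j)%O.
Proof.
move=> [Hl Ht] Hu.
have := Ht (upd t u) _ j; rewrite /upd dfwith_in; apply.
move=> a Aa k; rewrite /upd; case: (dfwithP t u k) => [|k' Hk]; first exact: Hu.
exact: Hl.
Qed.

Theorem lemma5p7 (R : realType) (I : finType) (d : I -> Order.disp_t)
  (T : forall i, latticeType (d i)) (S : set (profile T)) (f : I -> profile T -> R) :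
  supermodular_game S f ->
  subcomplete S ->
  (forall i (x : profile T), S x ->
     downward_usc (fun a b : T i => (a <= b)%O) (Si S i x)
       (fun a => f i (upd x a))) ->
  forall i (x : profile T) (C : set (profile T)),
    C `<=` Sx S x -> C !=set0 -> is_chain (@ple I d T) C ->
    exists b, Sx S x b /\ (forall c, C c -> ple b c) /\
      (limsup_chain (@ple I d T) C (fun c => f i (upd x (c i)))
         <= (f i (upd x (b i)))%:E)%E.
Proof.
move=> _ Hsc Husc i x C CS [c0 Cc0] Hch.
have [_ [b [Hb Sb]]] := Hsc C (fun c Cc => proj1 (CS c Cc)) (ex_intro _ c0 Cc0).
have bglb : forall j (u : T j), (forall c, C c -> (u <= c j)%O) -> (u <= b j)%O.
  by move=> j u; apply: glb_coord Hb.
have blb : forall c, C c -> ple b c by move=> c Cc; exact: (proj1 Hb c Cc).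
have bSi : forall j, Si S j x (b j).
  move=> j.
  pose A := [set upd x (c j) | c in C].
  have AS : A `<=` S by move=> _ [c Cc <-]; exact: (proj2 (CS c Cc) j).
  have [_ [t [Ht St]]] := Hsc A AS (ex_intro _ _ (ex_intro2 _ _ c0 Cc0 erefl)).
  rewrite /Si /=; suff -> : upd x (b j) = t by [].
  apply: functional_extensionality_dep => k; rewrite /upd.
  case: (dfwithP x (b j) k) => [|k' Hk].
  - apply/eqP; rewrite eq_le; apply/andP; split.
    + apply: (@glb_coord _ _ _ A t _ _ Ht) => _ [c Cc <-]; rewrite /upd dfwith_in.
      exact: blb.
    + apply: bglb => c Cc.
      have := proj1 Ht (upd x (c j)) (ex_intro2 _ _ c Cc erefl) j.
      by rewrite /upd dfwith_in.
  - apply/eqP; rewrite eq_le; apply/andP; split.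
    + apply: (@glb_coord _ _ _ A t _ _ Ht) => _ [c Cc <-]; rewrite /upd dfwith_out //.
    + have := proj1 Ht (upd x (c0 j)) (ex_intro2 _ _ c0 Cc0 erefl) k'.
      by rewrite /upd dfwith_out.
exists b; split; first by split.
split; first exact: blb.
pose x' := upd x (c0 i).
have Sx' : S x' by exact: (proj2 (CS c0 Cc0) i).
have updx' : forall a : T i, upd x' a = upd x a.
  move=> a; apply: functional_extensionality_dep => k; rewrite /x' /upd.
  case: (dfwithP x a k) => [|k' Hk]; first by rewrite dfwith_in.
  by rewrite !dfwith_out.
pose C' := [set c i | c in C].
have C'S : C' `<=` Si S i x'.
  by move=> _ [c Cc <-]; rewrite /Si /= updx'; exact: (proj2 (CS c Cc) i).
have C'ch : is_chain (fun a b : T i => (a <= b)%O) C'.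
  move=> _ _ [c Cc <-] [c' Cc' <-].
  by case: (Hch c c' Cc Cc') => H; [left|right]; apply: H.
have glbC' : is_glb_in (fun a b : T i => (a <= b)%O) (Si S i x') C' (b i).
  split; first by rewrite /Si /= updx'; exact: bSi.
  split; first by move=> _ [c Cc <-]; exact: blb.
  by move=> u _ Hu; apply: bglb => c Cc; apply: Hu; exists c.
have := Husc i x' Sx' C' C'S (ex_intro _ _ (ex_intro2 _ _ c0 Cc0 erefl)) C'ch
  (b i) glbC'.
rewrite updx'; apply: le_trans.
apply: le_ereal_inf_tmp => _ [a' [c' Cc' <-] <-].
apply: (@le_trans _ _ (ereal_sup [set (f i (upd x (c i)))%:E
            | c in [set c | C c /\ ple c c']])).
  by apply: ereal_inf_lbound; exists c'.
apply: ereal_sup_le => _ [c [Cc lec] <-].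
exists (c i); first by split; [exists c | exact: lec].
by rewrite updx'.
Qed.
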